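(* Let $n\ge1$ and let $\sigma\in(0,1)$, $c,d,\epsilon,l,s,y,y_->0$, $\tau\ge0$ be constants with $s\le l$. For $\alpha>0$ let $\eta=\max(|1-n\alpha l|,|1-n\alpha s|)$ and $$G_\alpha=\begin{bmatrix}\sigma&0&\alpha\\ \alpha cly_-&\eta&0\\ cd\epsilon ly_-(\tau+\alpha lyy_-)&\alpha d\epsilon l^2yy_-&\sigma+\alpha cd\epsilon ly_-\end{bmatrix}.$$ Let $\Delta=nscd\epsilon ly_-(1-\sigma+\tau)$ and $$\overline{\alpha}=\min\left\{\frac{\sqrt{\Delta^2+4ns(1-\sigma)^2cd\epsilon l^2yy_-^2(l+ns)}-\Delta}{2cd\epsilon l^2yy_-^2(l+ns)},\ \frac{1}{nl}\right\}.$$ Then the spectral radius satisfies $\rho(G_\alpha)<1$ for every $\alpha\in(0,\overline{\alpha})$.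
   Context: In the paper these constants arise as follows (not needed for the statement): $\sigma$ is the value of a matrix norm of $A-A_\infty$ for the column-stochastic weight matrix $A$ and its limit $A_\infty$; $c,d$ are norm-equivalence constants; $\tau=\|A-I\|_2$, $\epsilon=\|I-A_\infty\|_2$; $y,y_-$ are uniform bounds on $\|Y_k\|_2$, $\|Y_k^{-1}\|_2$; $l,s$ are the Lipschitz and strong-convexity constants of the local objectives. $\rho(\cdot)$ denotes spectral radius. *)

(* Defs.v *)
From HB Require Import structures.
From mathcomp Require Import all_boot all_order all_algebra.
From mathcomp Require Import complex.
From mathcomp Require Import all_classical all_reals.
Set Implicit Arguments. Unset Strict Implicit. Unset Printing Implicit Defensive.
Import Order.TTheory GRing.Theory Num.Theory.
Local Open Scope ring_scope.

Definition cmod (R : rcfType) (z : R[i]) : R :=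
  Num.sqrt (complex.Re z ^+ 2 + complex.Im z ^+ 2).

Definition cplx_mx (R : rcfType) (m : nat) (A : 'M[R]_m) : 'M[R[i]]_m :=
  map_mx (fun x => x%:C)%C A.

Definition spectral_radius (R : realType) (m : nat) (A : 'M[R]_m) : R :=
  reals.sup [set cmod lam | lam in [set lam : R[i] | eigenvalue (cplx_mx A) lam]]%classic.

Definition G_alpha (R : realType) (n : nat)
    (sigma c d eps l s y ym tau alpha : R) : 'M[R]_3 :=
  let eta := Num.max `|1 - n%:R * alpha * l| `|1 - n%:R * alpha * s| in
  \matrix_(i < 3, j < 3)
    nth 0 (nth [::] [:: [:: sigma; 0; alpha];
        [:: alpha * c * l * ym; eta; 0];
        [:: c * d * eps * l * ym * (tau + alpha * l * y * ym);
            alpha * d * eps * l ^+ 2 * y * ym;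
            sigma + alpha * c * d * eps * l * ym]] i) j.

Definition alpha_bar (R : realType) (n : nat)
    (sigma c d eps l s y ym tau : R) : R :=
  let Delta := n%:R * s * c * d * eps * l * ym * (1 - sigma + tau) in
  let K := c * d * eps * l ^+ 2 * y * ym ^+ 2 * (l + n%:R * s) in
  Num.min ((Num.sqrt (Delta ^+ 2 + 4 * n%:R * s * (1 - sigma) ^+ 2 * K) - Delta)
              / (2 * K))
          (1 / (n%:R * l)).

(* Main.v *)
Require Import Defs.
From HB Require Import structures.
From mathcomp Require Import all_boot all_order all_algebra.
From mathcomp Require Import complex.
From mathcomp Require Import all_classical all_reals.
From mathcomp Require Import ring lra.
Import Order.TTheory GRing.Theory Num.Theory.
Local Open Scope ring_scope.

Lemma cmodE (R : rcfType) (z : R[i]) : (cmod z)%:C%C = `|z|.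
Proof. by rewrite normc_def. Qed.

Lemma cmod_ge0 (R : rcfType) (z : R[i]) : 0 <= cmod z.
Proof. by rewrite /cmod sqrtr_ge0. Qed.

Lemma argmax3 (R : realType) (F : 'I_3 -> R) : exists k, forall i, F i <= F k.
Proof.
case: (@arg_maxP _ _ _ ord0 xpredT F) => // k _ H; exists k => i; exact: H.
Qed.

Lemma aux (R : realType) (L a b q S : R) : 0 < a -> 0 < b ->
  L * a <= S -> S <= a / b * (q * b) -> L <= q.
Proof.
move=> a0 b0 h1 h2; have : L * a <= q * a.
  by apply: le_trans h1 (le_trans h2 _); rewrite mulrCA divfK ?gt_eqF // mulrC.
by rewrite ler_pM2r.
Qed.

Lemma eig_bound (R : realType) (M : 'M[R]_3) (w : 'I_3 -> R) (q : R) :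
  (forall i j, 0 <= M i j) -> (forall i, 0 < w i) -> 0 <= q ->
  (forall j, \sum_i w i * M i j <= q * w j) ->
  spectral_radius M <= q.
Proof.
move=> M0 w0 q0 Hw; rewrite /spectral_radius.
have [->|ne] := eqVneq [set cmod lam | lam in [set lam : R[i] | eigenvalue (cplx_mx M) lam]]%classic set0.
  by rewrite sup0.
apply: ge_sup; first by apply/set0P.
move=> _ [lam /eigenvalueP [u Hu unz] <-].
have Hj : forall j, cmod lam * cmod (u 0 j) <= \sum_i cmod (u 0 i) * M i j.
  move=> j; rewrite -lecR rmorphM /= !cmodE rmorph_sum /=.
  have := congr1 (fun A : 'M[R[i]]_(1,3) => A 0 j) Hu; rewrite !mxE => Hj.
  rewrite -normrM -Hj; apply: le_trans (ler_norm_sum _ _ _) _.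
  apply: ler_sum => i _; rewrite !mxE normrM rmorphM /= cmodE; apply: ler_wpM2l => //.
  by rewrite ger0_norm // lecR.
have [k Hk] := @argmax3 _ (fun i => cmod (u 0 i) / w i).
have uk : 0 < cmod (u 0 k).
  rewrite lt_def cmod_ge0 andbT; apply/negP => /eqP uk0.
  move/negP: unz; apply; apply/eqP/rowP => i; rewrite mxE.
  have := Hk i; rewrite /= uk0 mul0r => hi.
  have : cmod (u 0 i) = 0.
    apply/eqP; rewrite eq_le cmod_ge0 andbT.
    by move: hi; rewrite ler_pdivrMr // mul0r.
  by move/(congr1 (fun x => x%:C%C)); rewrite cmodE => /eqP; rewrite normr_eq0 => /eqP.
apply: (@aux _ _ _ _ _ _ uk (w0 k) (Hj k)).
apply: le_trans (_ : \sum_i (cmod (u 0 k) / w k) * (w i * M i k) <= _).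
  apply: ler_sum => i _; rewrite mulrA; apply: ler_wpM2r => //.
  by rewrite -ler_pdivrMr // mulrC.
rewrite -mulr_sumr; apply: ler_wpM2l (Hw k).
by rewrite divr_ge0 // ?cmod_ge0 ?ltW.
Qed.
Lemma quad (R : realType) (K D C a : R) : 0 < K -> 0 <= D -> 0 <= C -> 0 < a ->
  a < (Num.sqrt (D ^+ 2 + 4 * C * K) - D) / (2 * K) -> K * a ^+ 2 + D * a < C.
Proof.
move=> K0 D0 C0 a0 h.
have h2 : 2 * K * a + D < Num.sqrt (D ^+ 2 + 4 * C * K).
  by rewrite -ltrBrDr mulrC -ltr_pdivlMr ?mulr_gt0.
have hs : Num.sqrt (D ^+ 2 + 4 * C * K) ^+ 2 = D ^+ 2 + 4 * C * K.
  by rewrite sqr_sqrtr // addr_ge0 ?sqr_ge0 // !mulr_ge0 // ltW.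
have hs0 := sqrtr_ge0 (D ^+ 2 + 4 * C * K).
set t := Num.sqrt _ in h2 hs hs0.
have : (2 * K * a + D) ^+ 2 < t ^+ 2.
  by rewrite ltr_pXn2r // ?qualifE /= ?(ltW (lt_le_trans _ (ltW h2)))// addr_ge0 // ?mulr_ge0 // ltW.
rewrite hs => h3.
have : 4 * K * (K * a ^+ 2 + D * a) < 4 * K * C by lra.
by rewrite ltr_pM2l ?mulr_gt0.
Qed.

Lemma eqle (R : realType) (x y : R) : x = y -> x <= y.
Proof. by move->. Qed.

Lemma ord3_ind (P : 'I_3 -> Prop) :
  P ord0 -> P (Ordinal (isT : (1 < 3)%N)) -> P (Ordinal (isT : (2 < 3)%N)) -> forall i, P i.
Proof.
move=> h0 h1 h2 [[|[|[|m]]] Hm] //.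
- by rewrite (bool_irrelevance Hm (ltn0Sn _)).
- by rewrite (bool_irrelevance Hm isT).
- by rewrite (bool_irrelevance Hm isT).
Qed.

Theorem lemma4 (R : realType) (n : nat) (sigma c d eps l s y ym tau : R) :
  (1 <= n)%N ->
  0 < sigma -> sigma < 1 ->
  0 < c -> 0 < d -> 0 < eps -> 0 < l -> 0 < s -> 0 < y -> 0 < ym ->
  0 <= tau -> s <= l ->
  forall alpha : R, 0 < alpha -> alpha < alpha_bar n sigma c d eps l s y ym tau ->
  spectral_radius (G_alpha n sigma c d eps l s y ym tau alpha) < 1.
Proof.
move=> n1 s0 s1 c0 d0 e0 l0 sp0 y0 ym0 t0 sl a a0.
rewrite /alpha_bar /= lt_min => /andP [ha1 ha2].
set N := (n%:R : R).
have N0 : 0 < N by rewrite ltr0n.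
set A := c * d * eps * l * ym.
set K := c * d * eps * l ^+ 2 * y * ym ^+ 2 * (l + N * s).
set Dl := N * s * c * d * eps * l * ym * (1 - sigma + tau).
set C := N * s * (1 - sigma) ^+ 2.
have A0 : 0 < A by rewrite !mulr_gt0.
have K0 : 0 < K by rewrite !mulr_gt0 // addr_gt0 // mulr_gt0.
have Dl0 : 0 <= Dl by rewrite ltW // !mulr_gt0 //; lra.
have C0 : 0 <= C by rewrite mulr_ge0 // ?sqr_ge0 // ltW // mulr_gt0.
have hq : K * a ^+ 2 + Dl * a < C.
  apply: quad => //; rewrite (_ : 4 * C * K = 4 * N * s * (1 - sigma) ^+ 2 * K).
    exact: ha1.
  rewrite /C; ring.
have Nal : N * a * l < 1.
  move: ha2; rewrite ltr_pdivlMr ?mulr_gt0 // => h; lra.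
have Nas : N * a * s <= N * a * l by rewrite ler_wpM2l // ?mulr_ge0 // ltW.
have Nas0 : 0 < N * a * s by rewrite !mulr_gt0.
have eta_eq : Num.max `|1 - N * a * l| `|1 - N * a * s| = 1 - N * a * s.
  rewrite !ger0_norm; [|lra|lra]; rewrite max_r //; lra.
set E := a * c * l * ym.
set K1 := c * d * eps * l * ym * (tau + a * l * y * ym).
set K2 := a * d * eps * l ^+ 2 * y * ym.
set Dd := 1 - sigma - a * A.
set Q := (1 - sigma) * Dd / a - K1 - E * (K2 / a) / (N * s).
have E0 : 0 < E by rewrite !mulr_gt0.
have K10 : 0 < K1 by rewrite !mulr_gt0 // ltr_wpDl // !mulr_gt0.
have K20 : 0 < K2 by rewrite !mulr_gt0.
have Q0 : 0 < Q.
  have e : a * (N * s) * Q = C - (K * a ^+ 2 + Dl * a).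
    rewrite /Q /C /K /Dl /Dd /A /K1 /E /K2; field.
    by rewrite !gt_eqF.
  have : 0 < a * (N * s) * Q by rewrite e subr_gt0.
  by rewrite pmulr_rgt0 // !mulr_gt0.
have s10 : 0 < 1 - sigma by rewrite subr_gt0.
set w1 := K2 / a / (N * s) + Q / (2 * E).
set w0 := Dd / a - Q / (4 * (1 - sigma)).
have h2 : K2 / a < N * s * w1.
  have e : N * s * w1 - K2 / a = N * s * Q / (2 * E).
    rewrite /w1; field; by rewrite !gt_eqF.
  by rewrite -subr_gt0 e !mulr_gt0 // invr_gt0 mulr_gt0.
have h1 : E * w1 + K1 < (1 - sigma) * w0.
  have e : (1 - sigma) * w0 - (E * w1 + K1) = Q / 4.
    rewrite /w0 /w1 /Q; field; by rewrite !gt_eqF.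
  by rewrite -subr_gt0 e; lra.
have h3 : a * w0 < Dd.
  have e : Dd - a * w0 = a * Q / (4 * (1 - sigma)).
    rewrite /w0; field; by rewrite !gt_eqF.
  by rewrite -subr_gt0 e !mulr_gt0 // invr_gt0 mulr_gt0.
have hw1 : 0 < w1 by apply: addr_gt0; apply: divr_gt0 => //; rewrite ?divr_gt0 ?mulr_gt0.
have hw0 : 0 < w0.
  have : 0 < (1 - sigma) * w0 by apply: lt_trans _ h1; apply: addr_gt0 => //; apply: mulr_gt0.
  by rewrite pmulr_rgt0.
set eta := Num.max `|1 - N * a * l| `|1 - N * a * s|.
set q0 := sigma + (E * w1 + K1) / w0.
set q1 := eta + K2 / w1.
set q2 := sigma + a * A + a * w0.
have q0lt : q0 < 1.
  by rewrite /q0 -ltrBrDl ltr_pdivrMr // mulrC.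
have q1lt : q1 < 1.
  rewrite /q1 /eta eta_eq; suff : K2 / w1 < N * a * s by lra.
  rewrite ltr_pdivrMr //.
  have e : a * (K2 / a) = K2 by field; rewrite gt_eqF.
  have : a * (K2 / a) < a * (N * s * w1) by rewrite ltr_pM2l.
  rewrite e => h; lra.
have q2lt : q2 < 1 by rewrite /q2 /Dd in h3 *; lra.
apply: (le_lt_trans (@eig_bound R _ (fun i => nth 0 [:: w0; w1; 1] i) (Num.max q0 (Num.max q1 q2)) _ _ _ _)).
- apply: ord3_ind; apply: ord3_ind; rewrite !mxE /=.
  all: try by rewrite le_max normr_ge0.
  all: repeat (first [ done | (by apply: ltW) | apply: addr_ge0 | apply: mulr_ge0 | apply: exprn_ge0 ]).
- by apply: ord3_ind.
- by rewrite le_max /q0 ltW // addr_gt0 // divr_gt0 // addr_gt0 // mulr_gt0.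
- apply: ord3_ind; rewrite !big_ord_recl big_ord0 !mxE /=.
  + apply: le_trans (_ : _ <= q0 * w0) _.
      by apply: eqle; rewrite /q0 /E /K1; field; rewrite gt_eqF.
    by apply: ler_wpM2r; [exact: ltW | rewrite le_max lexx].
  + apply: le_trans (_ : _ <= q1 * w1) _.
      by apply: eqle; rewrite /q1 /eta /K2; field; rewrite gt_eqF.
    by apply: ler_wpM2r; [exact: ltW | rewrite le_max le_max lexx orbT].
  + apply: le_trans (_ : _ <= q2 * 1) _.
      by apply: eqle; rewrite /q2 /A; ring.
    by apply: ler_wpM2r => //; rewrite le_max le_max lexx !orbT.
rewrite gt_max q0lt gt_max q1lt q2lt //.
Qed.
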